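(* Let $n\ge2$, $c\in(0,\infty)$, and let $\Sigma_n\in\mathbb{R}^{n\times n}$ have entries $$(\Sigma_n)_{ij}=\frac{\pi}{i+j}+c\,\frac{4\pi^2}{(i+1)(j+1)}\ \text{ if } c\in(0,1],\qquad (\Sigma_n)_{ij}=\frac{\pi}{c(i+j)}+\frac{4\pi^2}{(i+1)(j+1)}\ \text{ if } c\in(1,\infty).$$ Then $\Sigma_n=LU$ with $L=(l_{ij})$, $U=(u_{ij})$ given by $l_{ij}=0$ for $i<j$, $$l_{ij}=\frac{\prod_{k=1}^{j-1}(i-k)\prod_{k=1}^{j}(j+k)}{\prod_{k=1}^{j-1}(j-k)\prod_{k=1}^{j}(i+k)}\quad(i\ge j),$$ $u_{ij}=0$ for $i>j$, $u_{1j}=\frac{\pi(1+2c\pi)}{j+1}$ if $c\in(0,1]$, $u_{1j}=\frac{\pi(1+2c\pi)}{c(j+1)}$ if $c\in(1,\infty)$, and for $1<i\le j$: $$u_{ij}=\frac{\pi\prod_{k=1}^{i-1}(i-k)(j-k)}{(i+j)\prod_{k=1}^{i-1}(i+k)\prod_{k=1}^{i-1}(j+k)}\ \ (c\in(0,1]),\qquad u_{ij}=\frac{\pi\prod_{k=1}^{i-1}(i-k)(j-k)}{c(i+j)\prod_{k=1}^{i-1}(i+k)\prod_{k=1}^{i-1}(j+k)}\ \ (c\in(1,\infty)).$$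
   Context: $\Sigma_n$ is the asymptotic covariance matrix, in the critical regime $t\delta_t^d\to c$, of the ''vector of natural increasing powers'' $(\tilde L_t^{(0)},\dots,\tilde L_t^{(n-1)})$ of normalized length power functionals in dimension $d=2$ (so $\tau_i=i-1$, $\kappa_2=\pi$) for a window of volume $1$. *)

(* Defs.v *)
From HB Require Import structures.
From mathcomp Require Import all_boot all_order all_algebra.
From mathcomp Require Import all_classical all_reals all_analysis.
Set Implicit Arguments. Unset Strict Implicit. Unset Printing Implicit Defensive.
Import Order.TTheory GRing.Theory Num.Theory.
Local Open Scope ring_scope.

(* All coefficient functions below use the paper's 1-based indices i, j. *)

Definition sigma_coef (R : realType) (c : R) (i j : nat) : R :=
  if c <= 1 then pi / (i + j)%:R + c * (4 * pi ^+ 2) / ((i + 1)%:R * (j + 1)%:R)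
  else pi / (c * (i + j)%:R) + 4 * pi ^+ 2 / ((i + 1)%:R * (j + 1)%:R).

Definition l_coef (R : realType) (i j : nat) : R :=
  if (i < j)%N then 0
  else ((\prod_(1 <= k < j) (i%:R - k%:R)) * (\prod_(1 <= k < j.+1) (j + k)%:R))
     / ((\prod_(1 <= k < j) (j%:R - k%:R)) * (\prod_(1 <= k < j.+1) (i + k)%:R)).

Definition u_coef (R : realType) (c : R) (i j : nat) : R :=
  if (j < i)%N then 0
  else if i == 1%N then
    (if c <= 1 then pi * (1 + 2 * c * pi) / (j + 1)%:R
     else pi * (1 + 2 * c * pi) / (c * (j + 1)%:R))
  else
    (if c <= 1 then
       pi * (\prod_(1 <= k < i) ((i%:R - k%:R) * (j%:R - k%:R)))
       / ((i + j)%:R * (\prod_(1 <= k < i) (i + k)%:R) * (\prod_(1 <= k < i) (j + k)%:R))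
     else
       pi * (\prod_(1 <= k < i) ((i%:R - k%:R) * (j%:R - k%:R)))
       / (c * (i + j)%:R * (\prod_(1 <= k < i) (i + k)%:R) * (\prod_(1 <= k < i) (j + k)%:R))).

Definition SigmaMx (R : realType) (n : nat) (c : R) : 'M[R]_n :=
  \matrix_(i < n, j < n) sigma_coef c i.+1 j.+1.
Definition LMx (R : realType) (n : nat) : 'M[R]_n :=
  \matrix_(i < n, j < n) l_coef R i.+1 j.+1.
Definition UMx (R : realType) (n : nat) (c : R) : 'M[R]_n :=
  \matrix_(i < n, j < n) u_coef c i.+1 j.+1.

(* Main.v *)
Require Import Defs.
From HB Require Import structures.
From mathcomp Require Import all_boot all_order all_algebra.
From mathcomp Require Import all_classical all_reals all_analysis.
From mathcomp Require Import ring lra.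
Import Order.TTheory GRing.Theory Num.Theory.
Local Open Scope ring_scope.

Section H.
Variable R : realType.

Lemma prod_nat_gt0 (a b : nat) (F : nat -> R) :
  (forall k, (a <= k < b)%N -> 0 < F k) -> 0 < \prod_(a <= k < b) F k.
Proof.
move=> H; rewrite big_nat_cond; apply: prodr_gt0 => k /andP[Hk _]; exact: H.
Qed.

Lemma prod_nat_eq0 (a b k : nat) (F : nat -> R) :
  (a <= k < b)%N -> F k = 0 -> \prod_(a <= t < b) F t = 0.
Proof.
move=> /andP[H1 H2] H0.
rewrite (big_cat_nat (n:=k)) //=; last exact: ltnW.
by rewrite [X in _ * X]big_ltn // H0 mul0r mulr0.
Qed.

Definition lf (i m : nat) : R :=
  ((\prod_(1 <= k < m) (i%:R - k%:R)) * (\prod_(1 <= k < m.+1) (m + k)%:R))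
     / ((\prod_(1 <= k < m) (m%:R - k%:R)) * (\prod_(1 <= k < m.+1) (i + k)%:R)).

Definition hf (m j : nat) : R :=
  (\prod_(1 <= k < m) ((m%:R - k%:R) * (j%:R - k%:R)))
       / ((m + j)%:R * (\prod_(1 <= k < m) (m + k)%:R) * (\prod_(1 <= k < m) (j + k)%:R)).

Definition Rf (i j p : nat) : R :=
  (\prod_(1 <= t < p.+1) (i%:R - t%:R)) * (\prod_(1 <= t < p.+1) (j%:R - t%:R))
  / ((\prod_(1 <= t < p.+1) (i + t)%:R) * (\prod_(1 <= t < p.+1) (j + t)%:R) * (i + j)%:R).

Lemma posP (i : nat) (F : nat -> nat) : (forall k, 0 < F k)%N ->
  0 < \prod_(1 <= k < i) (F k)%:R :> R.
Proof. move=> H; apply: prod_nat_gt0 => k _; by rewrite ltr0n. Qed.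

Lemma key (i j m : nat) : (0 < i)%N -> (0 < j)%N ->
  lf i m.+1 * hf m.+1 j = Rf i j m - Rf i j m.+1.
Proof.
move=> Hi Hj.
rewrite /lf /hf /Rf.
rewrite (big_nat_recr m.+1) //= (big_nat_recr m.+1 _ (fun k => (i+k)%:R)) //=.
rewrite (big_nat_recr m.+1 _ (fun k => i%:R - k%:R)) //=.
rewrite (big_nat_recr m.+1 _ (fun k => j%:R - k%:R)) //=.
rewrite (big_nat_recr m.+1 _ (fun k => (j+k)%:R)) //=.
rewrite big_split /=.
have HM : 0 < \prod_(1 <= k < m.+1) ((m.+1)%:R - k%:R) :> R.
  apply: prod_nat_gt0 => k /andP[_ Hk]; by rewrite subr_gt0 ltr_nat.
have HQM := @posP m.+1 (fun k => m.+1 + k)%N (fun k => erefl).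
have HQI : 0 < \prod_(1 <= k < m.+1) (i + k)%:R :> R.
  by apply: posP => k; rewrite addn_gt0 Hi.
have HQJ : 0 < \prod_(1 <= k < m.+1) (j + k)%:R :> R.
  by apply: posP => k; rewrite addn_gt0 Hj.
move: HM HQM HQI HQJ.
move: (\prod_(1 <= k < m.+1) ((m.+1)%:R - k%:R)) => PM.
move: (\prod_(1 <= k < m.+1) (m.+1 + k)%:R) => QM.
move: (\prod_(1 <= k < m.+1) (i + k)%:R) => QI.
move: (\prod_(1 <= k < m.+1) (j + k)%:R) => QJ.
move: (\prod_(1 <= k < m.+1) (i%:R - k%:R)) => PI.
move: (\prod_(1 <= k < m.+1) (j%:R - k%:R)) => PJ.
rewrite !natrD.
have : 0 < i%:R :> R by rewrite ltr0n.
have : 0 < j%:R :> R by rewrite ltr0n.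
have : 0 <= m%:R :> R by [].
rewrite -natr1.
move: (i%:R) (j%:R) (m%:R) => x y z Hz Hy Hx HM HQM HQI HQJ.
field.
repeat (apply/andP; split); rewrite gt_eqF //; lra.
Qed.

Lemma lf_zero i m : (0 < i)%N -> (i < m)%N -> lf i m = 0.
Proof.
move=> Hi Hm; rewrite /lf (@prod_nat_eq0 1 m i) ?Hi ?Hm ?subrr //.
by rewrite !mul0r.
Qed.

Lemma hf_zero m j : (0 < j)%N -> (j < m)%N -> hf m j = 0.
Proof.
move=> Hj Hm; rewrite /hf (@prod_nat_eq0 1 m j) ?Hj ?Hm ?subrr ?mulr0 //.
by rewrite !mul0r.
Qed.

Lemma Rf_zero i j p : (0 < i)%N -> (i <= p)%N -> Rf i j p = 0.
Proof.
move=> Hi Hp; rewrite /Rf (@prod_nat_eq0 1 p.+1 i) ?Hi ?ltnS ?Hp ?subrr //.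
by rewrite !mul0r.
Qed.

Lemma Rf0 i j : Rf i j 0 = 1 / (i + j)%:R.
Proof. by rewrite /Rf !big_geq // !mul1r. Qed.

Lemma sum_lh i j n : (0 < i)%N -> (0 < j)%N -> (i <= n)%N ->
  \sum_(k < n) lf i k.+1 * hf k.+1 j = 1 / (i + j)%:R.
Proof.
move=> Hi Hj Hn.
rewrite -(big_mkord xpredT (fun k => lf i k.+1 * hf k.+1 j)).
rewrite (@telescope_sumr_eq _ 0 n (fun k => - Rf i j k)) //.
  by rewrite Rf_zero // Rf0 oppr0 opprK add0r.
by move=> k _; rewrite key // opprK addrC.
Qed.

Lemma l_eq i k : l_coef R i.+1 k.+1 = lf i.+1 k.+1.
Proof. by rewrite /l_coef; case: ltnP => H //; rewrite lf_zero. Qed.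

Definition ca (c : R) : R := if c <= 1 then pi else pi / c.
Definition cb (c : R) : R := if c <= 1 then 2 * c * pi ^+ 2 else 2 * pi ^+ 2.

Lemma u_eq c k j : u_coef c k.+1 j.+1 =
  ca c * hf k.+1 j.+1 + (if k == 0%N then cb c / (j.+2)%:R else 0).
Proof.
rewrite /u_coef /ca /cb; case: ltnP => H.
  case: k H => // k H; rewrite hf_zero // mulr0 addr0 //.
case: k H => [|k] H.
  rewrite /hf !big_geq // !mulr1 /= .
  have : 0 <= j%:R :> R by [].
  rewrite !natrD; move: (j%:R) => y Hy.
  case: ifP => Hc; first by field; repeat (apply/andP; split); rewrite gt_eqF //; lra.
  have Hc' : 1 < c by rewrite ltNge Hc.
  field; repeat (apply/andP; split); rewrite gt_eqF //; lra.
rewrite /= addr0.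
have HQ1 := @posP k.+2 (fun t => k.+2 + t)%N (fun t => erefl).
have HQ2 := @posP k.+2 (fun t => j.+1 + t)%N (fun t => erefl).
have HD : 0 < (k.+2 + j.+1)%:R :> R by rewrite ltr0n.
rewrite /hf; case: ifP => Hc; first by rewrite !mulrA.
have Hc' : 1 < c by rewrite ltNge Hc.
move: HQ1 HQ2 HD.
move: (\prod_(1 <= t < k.+2) (k.+2 + t)%:R) => Q1.
move: (\prod_(1 <= t < k.+2) (j.+1 + t)%:R) => Q2.
move: (k.+2 + j.+1)%:R => D H1 H2 H3.
field; repeat (apply/andP; split); rewrite gt_eqF //; lra.
Qed.

End H.

Theorem proposition7p11 (R : realType) (n : nat) (c : R) :
  (2 <= n)%N -> 0 < c -> SigmaMx n c = LMx R n *m UMx n c.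
Proof.
move=> Hn Hc; apply/matrixP => i j; rewrite !mxE.
under eq_bigr => k _ do rewrite !mxE l_eq u_eq mulrDr mulrCA.
rewrite big_split /= -mulr_sumr sum_lh //.
case: n i j Hn => // n i j Hn.
rewrite big_ord_recl /= big1; last by move=> k _; rewrite mulr0.
rewrite addr0 /lf !big_nat1 (big_geq (m:=1) (n:=1)) // (big_geq (m:=1) (n:=1)) // !mul1r.
rewrite /sigma_coef /ca /cb -[j.+2]addn1.
have : 0 < j.+1%:R :> R by rewrite ltr0n.
have : 0 < i.+1%:R :> R by rewrite ltr0n.
rewrite !natrD; move: (i.+1%:R) (j.+1%:R) => x y Hx Hy.
case: ifP => H; first by field; repeat (apply/andP; split); rewrite gt_eqF //; lra.
have Hc' : 1 < c by rewrite ltNge H.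
field; repeat (apply/andP; split); rewrite gt_eqF //; lra.
Qed.
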